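(* Let $n\ge 3$, let $A=[a_{ij}]$ be a real $n\times n$ matrix with zero diagonal, and let $f(\sigma)=\sum_{k=1}^{n-1}\sum_{l=k+1}^n a_{\sigma(k)\sigma(l)}$ be the LOP objective function on $\Sigma_n$, and assume $\hat f_{(n-2,1,1)}=0$. Let $1\le i<j\le n$ and $\sigma\in\Sigma_n$, and let $\sigma_{ij}\circ\sigma$ denote the permutation obtained from $\sigma$ by exchanging the entries in positions $i$ and $j$ of its one-line notation (i.e. $[\sigma(1)\cdots\sigma(i-1)\ \sigma(j)\ \sigma(i+1)\cdots\sigma(j-1)\ \sigma(i)\ \sigma(j+1)\cdots\sigma(n)]$). Then $$f(\sigma)-f(\sigma_{ij}\circ\sigma)=(j-i)\bigl(a_{\sigma(i)\sigma(j)}-a_{\sigma(j)\sigma(i)}\bigr).$$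
   Context: $\Sigma_n$ is the symmetric group on $\{1,\dots,n\}$, permutations written in one-line notation $[\sigma(1)\cdots\sigma(n)]$ with $\sigma(k)$ the row/column index placed in position $k$. For a partition $\lambda$ of $n$, $\rho_\lambda$ is the irreducible representation of $\Sigma_n$ indexed by $\lambda$ and $\hat f_\lambda=\sum_{\sigma\in\Sigma_n}f(\sigma)\rho_\lambda(\sigma)$. (The hypothesis $\hat f_{(n-2,1,1)}=0$ is equivalent to $a_{pq}-a_{qp}+a_{qr}-a_{rq}=a_{pr}-a_{rp}$ for all $p,q,r$.) *)

(* Defs.v *)
From mathcomp Require Import all_boot all_order all_algebra all_fingroup.
Set Implicit Arguments. Unset Strict Implicit. Unset Printing Implicit Defensive.
Import GRing.Theory Num.Theory.
Local Open Scope ring_scope.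

(* Positions and values are indexed by 'I_n = {0,...,n-1} (0-based).
   A permutation s : 'S_n is read in one-line notation [s 0 ... s (n-1)]. *)

Definition LOP_obj (R : ringType) (n : nat) (A : 'M[R]_n) (s : 'S_n) : R :=
  \sum_(k < n) \sum_(l < n | (k < l)%N) A (s k) (s l).

(* The irreducible representation rho_{(n-2,1,1)} of S_n is (up to
   equivalence) the exterior square of the standard representation
   V = {x in R^n | sum x = 0}.  We realize Lambda^2 R^n as the space of
   skew-symmetric n x n matrices (e_a /\ e_b <-> E_ab - E_ba), with s acting
   by W |-> P_s W P_s^T; Lambda^2 V is the subspace of skew matrices with
   zero row sums.  \hat f_rho = sum_s f(s) rho(s) is then the operator
   W |-> sum_s f(s) P_s W P_s^T on that subspace (it preserves it), and
   \hat f_{(n-2,1,1)} = 0 means this operator vanishes on Lambda^2 V. *)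
Definition ext2_std_space (R : ringType) (n : nat) (W : 'M[R]_n) : Prop :=
  W^T = - W /\ (forall a : 'I_n, \sum_(b < n) W a b = 0).

Definition fourier_ext2std (R : comRingType) (n : nat) (f : 'S_n -> R)
  (W : 'M[R]_n) : 'M[R]_n :=
  \sum_(s : 'S_n) f s *: (perm_mx s *m W *m (perm_mx s)^T).

Definition fourier_hook_vanishes (R : comRingType) (n : nat) (f : 'S_n -> R)
  : Prop :=
  forall W : 'M[R]_n, ext2_std_space W -> fourier_ext2std f W = 0.

(* Main.v *)
Require Import Defs.
From mathcomp Require Import all_boot all_order all_algebra all_fingroup.
From mathcomp Require Import ring zify.
Import GRing.Theory Num.Theory.
Local Open Scope ring_scope.

Lemma conj_entry (R : comNzRingType) n (s : 'S_n) (W : 'M[R]_n) a b :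
  (perm_mx s *m W *m (perm_mx s)^T) a b = W (s a) (s b).
Proof. by rewrite tr_perm_mx -col_permE -row_permE !mxE. Qed.

Lemma sum_pick (R : nzRingType) n (F : 'I_n -> R) i :
  \sum_k F k * ((k == i)%:R) = F i.
Proof.
rewrite (bigD1 i) //= eqxx mulr1 big1 ?addr0 // => k /negbTE ->; by rewrite mulr0.
Qed.

Lemma count_mid n (i j : nat) :
  (\sum_(k < n) ((i < k) && (k < j) : nat) = minn n j - minn n i.+1)%N.
Proof.
elim: n => [|m IH]; first by rewrite big_ord0; lia.
rewrite big_ord_recr /= IH.
case h1: (i < m)%N; case h2: (m < j)%N; rewrite /=; lia.
Qed.


Lemma eval_e (R : comNzRingType) n (i j : 'I_n) (F : 'I_n -> 'I_n -> R) :
 \sum_(k < n) \sum_(l < n) ((k == i)%:R * (l == j)%:R + (k == i)%:R * ((i < l)%N && (l < j)%N)%:R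
    + (l == j)%:R * ((i < k)%N && (k < j)%N)%:R) * F k l
 = F i j + \sum_(l < n) ((i < l)%N && (l < j)%N)%:R * F i l
   + \sum_(k < n) ((i < k)%N && (k < j)%N)%:R * F k j.
Proof.
under eq_bigr => k _ do under eq_bigr => l _ do rewrite !mulrDl.
under eq_bigr => k _ do rewrite !big_split /=.
rewrite !big_split /=.
congr (_ + _ + _).
- transitivity (\sum_(k < n) F k j * (k == i)%:R); last exact: sum_pick.
  apply: eq_bigr => k _.
  transitivity (\sum_(l < n) ((k == i)%:R * F k l) * (l == j)%:R).
    by apply: eq_bigr => l _; ring.
  by rewrite sum_pick; ring.
- transitivity (\sum_(k < n) (\sum_(l < n) ((i < l)%N && (l < j)%N)%:R * F k l) * (k == i)%:R);
    last by rewrite (@sum_pick _ _ (fun k => \sum_(l < n) ((i < l)%N && (l < j)%N)%:R * F k l)).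
  apply: eq_bigr => k _; rewrite mulr_suml; apply: eq_bigr => l _; ring.
- apply: eq_bigr => k _.
  transitivity (\sum_(l < n) (((i < k)%N && (k < j)%N)%:R * F k l) * (l == j)%:R).
    by apply: eq_bigr => l _; ring.
  by rewrite sum_pick.
Qed.

Lemma diff_formula (R : comNzRingType) n (A : 'M[R]_n) (i j : 'I_n) (s : 'S_n) :
  (i < j)%N ->
  LOP_obj A s - LOP_obj A (tperm i j * s)%g =
  (A (s i) (s j) - A (s j) (s i)) +
  \sum_(k < n) ((i < k)%N && (k < j)%N)%:R *
     ((A (s i) (s k) - A (s k) (s i)) + (A (s k) (s j) - A (s j) (s k))).
Proof.
move=> hij.
set t := tperm i j.
have e1 : LOP_obj A (t * s)%g =
   \sum_(k < n) \sum_(l < n) (t k < t l)%N%:R * A (s k) (s l).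
  rewrite /LOP_obj (reindex_inj (@perm_inj _ t)).
  apply: eq_bigr => k _; rewrite big_mkcond (reindex_inj (@perm_inj _ t)).
  apply: eq_bigr => l _; rewrite !permM !tpermK /=.
  by case: ifP; rewrite ?mul1r ?mul0r.
have e0 : LOP_obj A s = \sum_(k < n) \sum_(l < n) (k < l)%N%:R * A (s k) (s l).
  rewrite /LOP_obj; apply: eq_bigr => k _; rewrite big_mkcond.
  by apply: eq_bigr => l _; case: ifP; rewrite ?mul1r ?mul0r.
pose e (k l : 'I_n) : R := (k == i)%:R * (l == j)%:R
   + (k == i)%:R * ((i < l)%N && (l < j)%N)%:R + (l == j)%:R * ((i < k)%N && (k < j)%N)%:R.
have ec : forall k l : 'I_n, (k < l)%N%:R - (t k < t l)%N%:R = e k l - e l k :> R.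
  move=> k l.
  have H : ((k < l) + ((l == i) * (k == j) + (l == i) * ((i < k) && (k < j)) + (k == j) * ((i < l) && (l < j)))
     = (t k < t l) + ((k == i) * (l == j) + (k == i) * ((i < l) && (l < j)) + (l == j) * ((i < k) && (k < j))))%N.
    rewrite /t !permE /= -!(inj_eq (@ord_inj n)).
    by repeat case: ifP => ?; lia.
  move/(congr1 (fun m : nat => m%:R : R)): H; rewrite !natrD !natrM => H.
  rewrite /e; apply/eqP; rewrite -subr_eq0; apply/eqP.
  move/eqP: H; rewrite -subr_eq0 => /eqP H.
  apply: etrans; last exact: H.
  ring.
rewrite e0 e1 -sumrB.
under eq_bigr => k _ do rewrite -sumrB.
under eq_bigr => k _ do under eq_bigr => l _ do rewrite -mulrBl ec mulrBl.
under eq_bigr => k _ do rewrite sumrB.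
rewrite sumrB [X in _ - X]exchange_big /=.
rewrite /e (@eval_e _ _ i j (fun k l => A (s k) (s l)))
  (@eval_e _ _ i j (fun k l => A (s l) (s k))) /=.
under [X in _ = _ + X]eq_bigr => k _ do rewrite mulrDr !mulrBr.
rewrite !big_split /= !sumrN.
ring.
Qed.

Lemma trans2 n (x0 x1 x y : 'I_n) : x0 != x1 -> x != y ->
  exists t : 'S_n, t x0 = x /\ t x1 = y.
Proof.
move=> h01 hxy.
set c := tperm x0 x x1.
have hc : c != x.
  apply/eqP => hc.
  have : tperm x0 x c = tperm x0 x x by rewrite hc.
  rewrite /c tpermK tpermR => e; by rewrite e eqxx in h01.
exists (tperm x0 x * tperm c y)%g; split; rewrite permM.
  by rewrite tpermL tpermD // eq_sym.
by rewrite -/c tpermL.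
Qed.

Lemma sum_trans (R : nzRingType) n (G : 'I_n -> 'I_n -> R) (x0 x1 x y : 'I_n) :
  x0 != x1 -> x != y ->
  \sum_(s : 'S_n) G (s x) (s y) = \sum_(s : 'S_n) G (s x0) (s x1).
Proof.
move=> h01 hxy; have [t [<- <-]] := @trans2 _ _ _ _ _ h01 hxy.
rewrite [RHS](reindex_inj (mulgI t)) /=; apply: eq_bigr => s _; by rewrite !permM.
Qed.

Theorem proposition2 (R : realFieldType) (n : nat) (A : 'M[R]_n)
  (hn : (3 <= n)%N)
  (hdiag : forall i : 'I_n, A i i = 0)
  (hfour : fourier_hook_vanishes (LOP_obj A))
  (i j : 'I_n) (hij : (i < j)%N) (s : 'S_n) :
  LOP_obj A s - LOP_obj A (tperm i j * s)%g
  = (j - i)%:R * (A (s i) (s j) - A (s j) (s i)).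
Proof.
pose b := fun p q : 'I_n => A p q - A q p.
have h0n : (0 < n)%N by lia.
have h1n : (1 < n)%N by lia.
pose x0 := Ordinal h0n.
pose x1 := Ordinal h1n.
have h01 : x0 != x1 by [].
have step1 : forall W : 'M[R]_n, ext2_std_space W ->
    \sum_(p < n) \sum_(q < n) b p q * W p q = 0.
  move=> W hW.
  have skew : forall x y, W y x = - W x y.
    move=> x y; have := congr1 (fun M : 'M[R]_n => M x y) hW.1.
    by rewrite /= !mxE.
  have h0 : \sum_(s : 'S_n) LOP_obj A s * W (s x0) (s x1) = 0.
    have := congr1 (fun M : 'M[R]_n => M x0 x1) (hfour W hW).
    rewrite /fourier_ext2std /= summxE mxE => H; apply: etrans H.
    by apply: eq_bigr => u _; rewrite mxE conj_entry.
  have h0' : \sum_(s : 'S_n) LOP_obj A (tperm x0 x1 * s)%g * W (s x0) (s x1) = 0.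
    transitivity (- \sum_(s : 'S_n) LOP_obj A s * W (s x0) (s x1)); last by rewrite h0 oppr0.
    rewrite (reindex_inj (mulgI (tperm x0 x1))) /= -sumrN.
    apply: eq_bigr => u _; rewrite !permM tpermL tpermR skew mulrN.
    by rewrite mulgA tperm2 mul1g.
  have h1 : \sum_(s : 'S_n) b (s x0) (s x1) * W (s x0) (s x1) = 0.
    transitivity (\sum_(s : 'S_n) LOP_obj A s * W (s x0) (s x1)
      - \sum_(s : 'S_n) LOP_obj A (tperm x0 x1 * s)%g * W (s x0) (s x1));
      last by rewrite h0 h0' subrr.
    rewrite -sumrB.
    apply: eq_bigr => u _; rewrite -mulrBl diff_formula //.
    rewrite big1 ?addr0 // => k _.
    have -> : ((x0 < k)%N && (k < x1)%N) = false by rewrite /=; lia.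
    by rewrite mul0r.
  have h2 : forall x y, \sum_(s : 'S_n) b (s x) (s y) * W (s x) (s y) = 0.
    move=> x y; case: (eqVneq x y) => [<-|hxy].
      by apply: big1 => u _; rewrite /b subrr mul0r.
    by rewrite (@sum_trans _ _ (fun p q => b p q * W p q) _ _ _ _ h01 hxy).
  have h3 : \sum_(s : 'S_n) \sum_(p < n) \sum_(q < n) b (s p) (s q) * W (s p) (s q) = 0.
    rewrite exchange_big big1 // => p _; rewrite exchange_big big1 // => q _.
  have h4 : \sum_(s : 'S_n) \sum_(p < n) \sum_(q < n) b (s p) (s q) * W (s p) (s q)
     = (n`!)%:R * \sum_(p < n) \sum_(q < n) b p q * W p q.
    rewrite mulr_natl -card_Sn -sumr_const; apply: eq_bigr => u _.
    rewrite [RHS](reindex_inj (@perm_inj _ u)); apply: eq_bigr => p _.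
    by rewrite [RHS](reindex_inj (@perm_inj _ u)).
  move: h3; rewrite h4 => /eqP; rewrite mulf_eq0 => /orP [|/eqP //].
  by rewrite pnatr_eq0 gtn_eqF ?fact_gt0.
have cyc : forall p q r, b p q + b q r + b r p = 0.
  move=> p q r.
  pose d := fun x y : 'I_n => ((x == y)%:R : R).
  pose C := \matrix_(x < n, y < n) (d x p * d y q - d x q * d y p + d x q * d y r
     - d x r * d y q + d x r * d y p - d x p * d y r).
  have sd : forall q0, \sum_(y < n) d y q0 = 1.
    move=> q0; transitivity (\sum_(y < n) 1 * d y q0).
      by apply: eq_bigr => y _; rewrite mul1r.
    exact: sum_pick.
  have hC : ext2_std_space C.
    split; first by apply/matrixP => x y; rewrite !mxE; ring.
    move=> a.
    transitivity (\sum_(y < n) (d a p * d y q - d a q * d y p + d a q * d y r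
     - d a r * d y q + d a r * d y p - d a p * d y r)).
      by apply: eq_bigr => y _; rewrite mxE.
    rewrite !big_split /= !sumrN -!mulr_sumr !sd; ring.
  have pick2 : forall (F : 'I_n -> 'I_n -> R) p0 q0,
      \sum_(x < n) \sum_(y < n) F x y * (d x p0 * d y q0) = F p0 q0.
    move=> F p0 q0.
    transitivity (\sum_(x < n) F x q0 * d x p0); last exact: sum_pick.
    apply: eq_bigr => x _.
    transitivity (\sum_(y < n) (F x y * d x p0) * d y q0).
      by apply: eq_bigr => y _; ring.
    by rewrite sum_pick.
  have := step1 C hC.
  under eq_bigr => x _ do under eq_bigr => y _ do rewrite mxE !mulrDr !mulrN.
  under eq_bigr => x _ do rewrite !big_split /= !sumrN.
  rewrite !big_split /= !sumrN !pick2 => H.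
  have H2 : 2 * (b p q + b q r + b r p) = 0.
    apply: etrans; last exact: H.
    rewrite /b; ring.
  move/eqP: H2; rewrite mulf_eq0 => /orP [|/eqP //].
  by rewrite pnatr_eq0.
rewrite diff_formula //.
have key : forall k, A (s i) (s k) - A (s k) (s i) + (A (s k) (s j) - A (s j) (s k))
     = A (s i) (s j) - A (s j) (s i).
  move=> k; have := cyc (s i) (s k) (s j); rewrite /b => H.
  apply/eqP; rewrite -subr_eq0; apply/eqP; apply: etrans; last exact: H.
  ring.
under eq_bigr => k _ do rewrite key.
rewrite -mulr_suml -natr_sum count_mid.
have e : (j - i)%N = (minn n j - minn n i.+1)%N.+1.
  have := ltn_ord j; have := ltn_ord i; lia.
rewrite e -natr1; ring.
Qed.
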